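(* Let $\mathfrak g$ be a finite-dimensional Lie algebra over a field $\mathbb K$ of characteristic zero having an ideal $\mathfrak h_m$ isomorphic to the Heisenberg algebra of dimension $2m+1$, such that the center of $\mathfrak g$ coincides with the center of $\mathfrak h_m$. Let $\mathcal A$ be a commutative subalgebra of $\operatorname{Ann}(\mathfrak h_m)$ complete in $\operatorname{Ann}(\mathfrak h_m)$, and $\mathcal B$ a complete commutative subalgebra of $S(\mathfrak h_m)$. Then $\mathcal A+\mathcal B$ is complete in $S(\mathfrak g)$.
   Context: The Heisenberg algebra $\mathfrak h_m$ is $V\oplus\mathbb K e$ with $\dim V=2m$, $e$ central and $[\xi_1,\xi_2]=\omega(\xi_1,\xi_2)e$ for $\xi_i\in V$, $\omega$ a symplectic form on $V$. $S(\mathfrak g)$ is the polynomial algebra on $\mathfrak g^*$ with Lie–Poisson bracket $\{f,g\}(x)=\langle x,[df(x),dg(x)]\rangle$; $S(\mathfrak h_m)\subset S(\mathfrak g)$. $\Phi_x(\xi,\eta)=\langle x,[\xi,\eta]\rangle$. $\operatorname{Ann}(\mathfrak h_m)=\{f\in S(\mathfrak g)\mid\{f,\eta\}=0\ \forall\eta\in\mathfrak h_m\}$. For a subalgebra $\mathcal F$, $d\mathcal F(x)$ is the span of the differentials of its elements at $x$; a commutative $\mathcal A\subset\mathcal F$ is complete in $\mathcal F$ if $d\mathcal A(x)$ is maximal $\Phi_x$-isotropic in $d\mathcal F(x)$ for generic $x\in\mathfrak g^*$. A commutative subalgebra of $S(\mathfrak l)$ is complete if its transcendence degree is $\frac12(\dim\mathfrak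 l+\operatorname{ind}\mathfrak l)$ (index = generic corank of $\Phi_x$), equivalently complete in $S(\mathfrak l)$ in the previous sense. $\mathcal A+\mathcal B$ is the smallest Poisson subalgebra containing both. *)

(* Defs.v *)
From HB Require Import structures.
From mathcomp Require Import all_boot all_order all_algebra.
From mathcomp Require Import mpoly.
Set Implicit Arguments.
Unset Strict Implicit.
Unset Printing Implicit Defensive.
Import Order.TTheory GRing.Theory Num.Theory.
Local Open Scope ring_scope.

(* The Lie algebra g is K^n, realised as row vectors 'rV[K]_n, with bracket br.
   An element x of g^* is given by its coordinates <x, e_i> in the dual basis,
   also stored as a row vector 'rV[K]_n.
   S(g) = polynomial functions on g^* = {mpoly K[n]}, where 'X_i is the basis
   vector e_i of g viewed as a linear function on g^*. *)

Section Defs.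
Variable K : fieldType.
Variable n : nat.
Local Notation vec := 'rV[K]_n.
Local Notation poly := {mpoly K[n]}.

Definition is_lie_bracket (br : vec -> vec -> vec) : Prop :=
  [/\ (forall a u v w, br (a *: u + v) w = a *: br u w + br v w),
      (forall a u v w, br u (a *: v + w) = a *: br u v + br u w),
      (forall u, br u u = 0) &
      (forall u v w, br u (br v w) + br v (br w u) + br w (br u v) = 0)].

Definition lin (v : vec) : poly := \sum_(i < n) v ord0 i *: 'X_i.

Definition evalp (f : poly) (x : vec) : K := meval (fun i => x ord0 i) f.

Definition dpoly (f : poly) (x : vec) : vec := \row_i evalp (mderiv i f) x.

Definition Phi (br : vec -> vec -> vec) (x xi eta : vec) : K :=
  \sum_(k < n) x ord0 k * br xi eta ord0 k.

(* Lie--Poisson bracket: {f,g}(x) = <x, [df(x), dg(x)]>, as a polynomial *)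
Definition pbr (br : vec -> vec -> vec) (f g : poly) : poly :=
  \sum_(i < n) \sum_(j < n)
     lin (br (delta_mx ord0 i) (delta_mx ord0 j)) * mderiv i f * mderiv j g.

Definition is_subalg (A : poly -> Prop) : Prop :=
  [/\ (forall c : K, A c%:MP),
      (forall f g, A f -> A g -> A (f + g)),
      (forall f g, A f -> A g -> A (f * g)) &
      (forall (c : K) f, A f -> A (c *: f))].

Definition is_poisson_subalg (br : vec -> vec -> vec) (A : poly -> Prop) : Prop :=
  is_subalg A /\ (forall f g, A f -> A g -> A (pbr br f g)).

Definition is_commutative (br : vec -> vec -> vec) (A : poly -> Prop) : Prop :=
  forall f g, A f -> A g -> pbr br f g = 0.

(* A + B : the smallest Poisson subalgebra containing A and B *)
Definition poisson_sum (br : vec -> vec -> vec) (A B : poly -> Prop) : poly -> Prop :=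
  fun f => forall C, is_poisson_subalg br C ->
    (forall g, A g -> C g) -> (forall g, B g -> C g) -> C f.

Definition Ann (br : vec -> vec -> vec) (h : vec -> Prop) : poly -> Prop :=
  fun f => forall eta, h eta -> pbr br f (lin eta) = 0.

Definition dspan (F : poly -> Prop) (x : vec) : vec -> Prop :=
  fun v => exists k (fs : 'I_k -> poly) (cs : 'I_k -> K),
    (forall i, F (fs i)) /\ v = \sum_(i < k) cs i *: dpoly (fs i) x.

Definition is_subspace (U : vec -> Prop) : Prop :=
  U 0 /\ forall (a : K) u v, U u -> U v -> U (a *: u + v).

Definition isotropic (br : vec -> vec -> vec) (x : vec) (U : vec -> Prop) : Prop :=
  forall u v, U u -> U v -> Phi br x u v = 0.

Definition max_isotropic_in (br : vec -> vec -> vec) (x : vec) (L W : vec -> Prop) : Prop :=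
  [/\ is_subspace L, (forall v, L v -> W v), isotropic br x L &
      forall U, is_subspace U -> isotropic br x U ->
        (forall v, L v -> U v) -> (forall v, U v -> W v) ->
        forall v, U v -> L v].

Definition generic (P : vec -> Prop) : Prop :=
  exists p : poly, p != 0 /\ forall x, evalp p x != 0 -> P x.

Definition complete_in (br : vec -> vec -> vec) (F A : poly -> Prop) : Prop :=
  [/\ forall f, A f -> F f, is_commutative br A &
      generic (fun x => max_isotropic_in br x (dspan A x) (dspan F x))].

Definition Sg : poly -> Prop := fun _ => True.

Definition center (br : vec -> vec -> vec) : vec -> Prop := fun z => forall y, br z y = 0.

Definition center_in (br : vec -> vec -> vec) (h : vec -> Prop) : vec -> Prop :=
  fun z => h z /\ forall y, h y -> br z y = 0.

Definition is_ideal (br : vec -> vec -> vec) (h : vec -> Prop) : Prop :=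
  is_subspace h /\ forall u v, h v -> h (br u v).

End Defs.

(* The Heisenberg algebra h_m = V (+) K e, V = K^(2m), with symplectic form
   omega(xi, eta) = xi *m om *m eta^T; realised on 'rV_(m.*2 + 1) with the
   last coordinate along e. *)
Definition symplectic_form (K : fieldType) (m : nat) (om : 'M[K]_(m.*2)) : Prop :=
  om^T = - om /\ om \in unitmx.

Definition heis_br (K : fieldType) (m : nat) (om : 'M[K]_(m.*2))
    (u v : 'rV[K]_(m.*2 + 1)) : 'rV[K]_(m.*2 + 1) :=
  row_mx 0 (lsubmx u *m om *m (lsubmx v)^T).

Definition img (K : fieldType) (k n : nat) (phi : 'rV[K]_k -> 'rV[K]_n) :
  'rV[K]_n -> Prop := fun v => exists u, v = phi u.

(* S(h) inside S(g), for h = image of phi: polynomials in the phi(e_j) *)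
Definition Sh (K : fieldType) (k n : nat) (phi : 'rV[K]_k -> 'rV[K]_n) :
  {mpoly K[n]} -> Prop :=
  fun f => exists q : {mpoly K[k]},
    f = comp_mpoly [tuple lin (phi (delta_mx ord0 j)) | j < k] q.

(* Main.v *)
Require Import Defs.
From HB Require Import structures.
From mathcomp Require Import all_boot all_order all_algebra.
From mathcomp Require Import mpoly.
From mathcomp Require Import ring.
Import Order.TTheory GRing.Theory Num.Theory.
Local Open Scope ring_scope.
Set Implicit Arguments. Unset Strict Implicit. Unset Printing Implicit Defensive.

Lemma xx_eq0 (V : zmodType) (x : V) : x = x + x -> x = 0.
Proof. by move=> h; have := congr1 (fun z => z - x) h; rewrite addrK subrr. Qed.

Section Basic.
Variable K : fieldType.
Variable n : nat.
Local Notation vec := 'rV[K]_n.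
Local Notation poly := {mpoly K[n]}.
Variable br : vec -> vec -> vec.
Hypothesis hbr : is_lie_bracket br.
Let hbr1 : forall a u v w, br (a *: u + v) w = a *: br u w + br v w.
Proof. by move: hbr; rewrite /is_lie_bracket; case. Qed.
Let hbr2 : forall a u v w, br u (a *: v + w) = a *: br u v + br u w.
Proof. by move: hbr; rewrite /is_lie_bracket; case. Qed.
Let hbr3 : forall u, br u u = 0.
Proof. by move: hbr; rewrite /is_lie_bracket; case. Qed.

Lemma brDl u v w : br (u + v) w = br u w + br v w.
Proof. by have := hbr1 1 u v w; rewrite !scale1r. Qed.
Lemma brZl a u w : br (a *: u) w = a *: br u w.
Proof.
have h0 : br 0 w = 0.
  by apply: xx_eq0; rewrite -brDl addr0.
by have := hbr1 a u 0 w; rewrite !addr0 h0 addr0.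
Qed.
Lemma brDr u v w : br u (v + w) = br u v + br u w.
Proof. by have := hbr2 1 u v w; rewrite !scale1r. Qed.
Lemma br0r u : br u 0 = 0.
Proof. by apply: xx_eq0; rewrite -brDr addr0. Qed.
Lemma br0l u : br 0 u = 0.
Proof. by apply: xx_eq0; rewrite -brDl addr0. Qed.
Lemma brZr a u w : br u (a *: w) = a *: br u w.
Proof. by have := hbr2 a u w 0; rewrite !addr0 br0r addr0. Qed.
Lemma brvv u : br u u = 0.
Proof. exact: hbr3. Qed.
Lemma brC u v : br u v = - br v u.
Proof.
have := brvv (u + v); rewrite brDl !brDr !brvv add0r addr0 => /eqP.
by rewrite addr_eq0 => /eqP.
Qed.
Lemma brNl u v : br (- u) v = - br u v.
Proof. by rewrite -scaleN1r brZl scaleN1r. Qed.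
Lemma brNr u v : br u (- v) = - br u v.
Proof. by rewrite -scaleN1r brZr scaleN1r. Qed.
Lemma brBl u v w : br (u - v) w = br u w - br v w.
Proof. by rewrite brDl brNl. Qed.
Lemma brBr u v w : br u (v - w) = br u v - br u w.
Proof. by rewrite brDr brNr. Qed.
Lemma br_suml (I : Type) (r : seq I) (P : pred I) (F : I -> vec) w :
  br (\sum_(i <- r | P i) F i) w = \sum_(i <- r | P i) br (F i) w.
Proof. by elim/big_rec2: _ => [|i a b _ <-]; rewrite ?br0l ?brDl. Qed.
Lemma br_sumr (I : Type) (r : seq I) (P : pred I) (F : I -> vec) w :
  br w (\sum_(i <- r | P i) F i) = \sum_(i <- r | P i) br w (F i).
Proof. by elim/big_rec2: _ => [|i a b _ <-]; rewrite ?br0r ?brDr. Qed.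

Lemma row_decomp (u : vec) : u = \sum_(i < n) u ord0 i *: delta_mx ord0 i.
Proof.
apply/rowP => j; rewrite summxE (bigD1 j) //= big1 ?addr0.
  by rewrite !mxE !eqxx mulr1.
by move=> i nij; rewrite !mxE eqxx /= eq_sym (negbTE nij) mulr0.
Qed.

Lemma br_expand u v : br u v =
  \sum_(i < n) \sum_(j < n) (u ord0 i * v ord0 j) *: br (delta_mx ord0 i) (delta_mx ord0 j).
Proof.
rewrite {1}[u]row_decomp br_suml; apply: eq_bigr => i _.
rewrite brZl {1}[v]row_decomp br_sumr scaler_sumr; apply: eq_bigr => j _.
by rewrite brZr scalerA.
Qed.

Lemma linD (u v : vec) : lin (u + v) = lin u + lin v.
Proof. by rewrite /lin -big_split; apply: eq_bigr => i _; rewrite mxE scalerDl. Qed.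
Lemma linZ a (u : vec) : lin (a *: u) = a *: lin u.
Proof. by rewrite /lin scaler_sumr; apply: eq_bigr => i _; rewrite mxE scalerA. Qed.
Lemma lin0 : lin (0 : vec) = 0.
Proof. by rewrite /lin big1 // => i _; rewrite mxE scale0r. Qed.
Lemma linN (u : vec) : lin (- u) = - lin u.
Proof. by rewrite -scaleN1r linZ scaleN1r. Qed.
Lemma linB (u v : vec) : lin (u - v) = lin u - lin v.
Proof. by rewrite linD linN. Qed.
Lemma lin_sum (I : Type) (r : seq I) (P : pred I) (F : I -> vec) :
  lin (\sum_(i <- r | P i) F i) = \sum_(i <- r | P i) lin (F i).
Proof. by elim/big_rec2: _ => [|i a b _ <-]; rewrite ?lin0 ?linD. Qed.

Lemma mderivXi (i j : 'I_n) : mderiv j ('X_i : poly) = (i == j)%:R%:MP.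
Proof.
rewrite mderivX mnm1E; case: eqP => [->|_]; last by rewrite scale0r.
have -> : (U_(j) - U_(j))%MM = 0%MM by apply/mnmP => k; rewrite mnmBE subnn mnm0E.
by rewrite mpolyX0 scale1r.
Qed.

Lemma mderiv_lin j (v : vec) : mderiv j (lin v) = (v ord0 j)%:MP.
Proof.
rewrite /lin raddf_sum /= (bigD1 j) //= big1 ?addr0.
  by rewrite mderivZ mderivXi eqxx -mul_mpolyC -mpolyCM mulr1.
by move=> i /negbTE nij; rewrite mderivZ mderivXi nij scaler0.
Qed.


Definition Der (eta : vec) (f : poly) : poly :=
  \sum_(i < n) lin (br (delta_mx ord0 i) eta) * mderiv i f.

Lemma DerD eta f g : Der eta (f + g) = Der eta f + Der eta g.
Proof. by rewrite /Der -big_split; apply: eq_bigr => i _; rewrite mderivD mulrDr. Qed.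
Lemma DerZ eta c f : Der eta (c *: f) = c *: Der eta f.
Proof. by rewrite /Der scaler_sumr; apply: eq_bigr => i _; rewrite mderivZ scalerAr. Qed.
Lemma DerC eta c : Der eta c%:MP = 0.
Proof. by rewrite /Der big1 // => i _; rewrite mderivC mulr0. Qed.
Lemma Der0 eta : Der eta 0 = 0.
Proof. by rewrite -mpolyC0 DerC. Qed.
Lemma DerN eta f : Der eta (- f) = - Der eta f.
Proof. by rewrite -scaleN1r DerZ scaleN1r. Qed.
Lemma DerB eta f g : Der eta (f - g) = Der eta f - Der eta g.
Proof. by rewrite DerD DerN. Qed.
Lemma DerM eta f g : Der eta (f * g) = f * Der eta g + g * Der eta f.
Proof.
rewrite /Der mulr_sumr mulr_sumr -big_split; apply: eq_bigr => i _.
by rewrite mderivM /=; ring.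
Qed.
Lemma Der_sum eta (I : Type) (r : seq I) (P : pred I) (F : I -> poly) :
  Der eta (\sum_(i <- r | P i) F i) = \sum_(i <- r | P i) Der eta (F i).
Proof. by elim/big_rec2: _ => [|i a b _ <-]; rewrite ?Der0 ?DerD. Qed.
Lemma Der_lin eta v : Der eta (lin v) = lin (br v eta).
Proof.
rewrite /Der {2}[v]row_decomp br_suml lin_sum; apply: eq_bigr => i _.
by rewrite mderiv_lin brZl linZ mulrC mul_mpolyC.
Qed.
Lemma Der_etaD eta1 eta2 f : Der (eta1 + eta2) f = Der eta1 f + Der eta2 f.
Proof. by rewrite /Der -big_split; apply: eq_bigr => i _; rewrite brDr linD mulrDl. Qed.
Lemma Der_etaZ a eta f : Der (a *: eta) f = a *: Der eta f.
Proof. by rewrite /Der scaler_sumr; apply: eq_bigr => i _; rewrite brZr linZ scalerAl. Qed.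
Lemma Der_eta0 f : Der 0 f = 0.
Proof. by rewrite /Der big1 // => i _; rewrite br0r lin0 mul0r. Qed.
Lemma Der_eta_sum (I : Type) (r : seq I) (P : pred I) (F : I -> vec) f :
  Der (\sum_(i <- r | P i) F i) f = \sum_(i <- r | P i) Der (F i) f.
Proof. by elim/big_rec2: _ => [|i a b _ <-]; rewrite ?Der_eta0 ?Der_etaD. Qed.

Lemma pbrE f g : pbr br f g = \sum_(j < n) Der (delta_mx ord0 j) f * mderiv j g.
Proof.
rewrite /pbr exchange_big; apply: eq_bigr => j _; rewrite /Der mulr_suml.
by apply: eq_bigr.
Qed.

Lemma pbr_lin f eta : pbr br f (lin eta) = Der eta f.
Proof.
rewrite pbrE {2}[eta]row_decomp Der_eta_sum; apply: eq_bigr => j _.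
by rewrite mderiv_lin Der_etaZ mulrC mul_mpolyC.
Qed.

Lemma pbrDl f g h : pbr br (f + g) h = pbr br f h + pbr br g h.
Proof. by rewrite !pbrE -big_split; apply: eq_bigr => j _; rewrite DerD mulrDl. Qed.
Lemma pbrZl c f h : pbr br (c *: f) h = c *: pbr br f h.
Proof. by rewrite !pbrE scaler_sumr; apply: eq_bigr => j _; rewrite DerZ scalerAl. Qed.
Lemma pbrCl c h : pbr br c%:MP h = 0.
Proof. by rewrite pbrE big1 // => j _; rewrite DerC mul0r. Qed.
Lemma pbrMl f g h : pbr br (f * g) h = f * pbr br g h + g * pbr br f h.
Proof.
rewrite !pbrE !mulr_sumr -big_split; apply: eq_bigr => j _.
by rewrite DerM /=; ring.
Qed.

Lemma pbrC f g : pbr br f g = - pbr br g f.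
Proof.
rewrite /pbr exchange_big -sumrN; apply: eq_bigr => i _.
rewrite -sumrN; apply: eq_bigr => j _.
rewrite [br (delta_mx _ j) _]brC linN; ring.
Qed.

Definition pr (x v : vec) : K := \sum_(k < n) x ord0 k * v ord0 k.

Lemma prD x u v : pr x (u + v) = pr x u + pr x v.
Proof. by rewrite /pr -big_split; apply: eq_bigr => k _; rewrite mxE mulrDr. Qed.
Lemma prZ x a u : pr x (a *: u) = a * pr x u.
Proof. by rewrite /pr mulr_sumr; apply: eq_bigr => k _; rewrite mxE; ring. Qed.
Lemma pr0 x : pr x 0 = 0.
Proof. by rewrite /pr big1 // => k _; rewrite mxE mulr0. Qed.
Lemma prN x u : pr x (- u) = - pr x u.
Proof. by rewrite -scaleN1r prZ mulN1r. Qed.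
Lemma pr_sum x (I : Type) (r : seq I) (P : pred I) (F : I -> vec) :
  pr x (\sum_(i <- r | P i) F i) = \sum_(i <- r | P i) pr x (F i).
Proof. by elim/big_rec2: _ => [|i a b _ <-]; rewrite ?pr0 ?prD. Qed.

Lemma evalpD (f g : poly) x : evalp (f + g) x = evalp f x + evalp g x.
Proof. exact: mevalD. Qed.
Lemma evalpM (f g : poly) x : evalp (f * g) x = evalp f x * evalp g x.
Proof. exact: mevalM. Qed.
Lemma evalpZ c (f : poly) x : evalp (c *: f) x = c * evalp f x.
Proof. exact: mevalZ. Qed.
Lemma evalpC c x : evalp (c%:MP : poly) x = c.
Proof. exact: mevalC. Qed.
Lemma evalp_sum (x : vec) (I : Type) (r : seq I) (P : pred I) (F : I -> poly) :
  evalp (\sum_(i <- r | P i) F i) x = \sum_(i <- r | P i) evalp (F i) x.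
Proof. exact: raddf_sum. Qed.
Lemma evalp_lin (v x : vec) : evalp (lin v) x = pr x v.
Proof.
rewrite /lin evalp_sum; apply: eq_bigr => k _.
by rewrite evalpZ /evalp mevalXU mulrC.
Qed.

Lemma PhiE x u v : Phi br x u v = pr x (br u v).
Proof. by []. Qed.

Lemma evalp_pbr f g x : evalp (pbr br f g) x = Phi br x (dpoly f x) (dpoly g x).
Proof.
rewrite PhiE br_expand pr_sum /pbr evalp_sum; apply: eq_bigr => i _.
rewrite pr_sum evalp_sum; apply: eq_bigr => j _.
by rewrite prZ !evalpM evalp_lin /dpoly !mxE; ring.
Qed.

Lemma dpolyD (f g : poly) x : dpoly (f + g) x = dpoly f x + dpoly g x.
Proof. by apply/rowP => i; rewrite !mxE mderivD evalpD. Qed.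
Lemma dpolyZ c (f : poly) x : dpoly (c *: f) x = c *: dpoly f x.
Proof. by apply/rowP => i; rewrite !mxE mderivZ evalpZ. Qed.
Lemma dpolyC c (x : vec) : dpoly (c%:MP : poly) x = 0.
Proof. by apply/rowP => i; rewrite !mxE mderivC -mpolyC0 evalpC. Qed.
Lemma dpolyM (f g : poly) x : dpoly (f * g) x = evalp f x *: dpoly g x + evalp g x *: dpoly f x.
Proof. by apply/rowP => i; rewrite !mxE mderivM evalpD !evalpM; ring. Qed.
Lemma dpoly_lin (v x : vec) : dpoly (lin v) x = v.
Proof. by apply/rowP => i; rewrite !mxE mderiv_lin evalpC. Qed.

End Basic.


Section Part2.
Variable K : fieldType.
Variable n : nat.
Local Notation vec := 'rV[K]_n.
Local Notation poly := {mpoly K[n]}.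
Variable br : vec -> vec -> vec.
Hypothesis hbr : is_lie_bracket br.

Section Subalg.
Variable S : poly -> Prop.
Hypothesis hS : is_subalg S.
Lemma subC c : S c%:MP. Proof. by case: hS. Qed.
Lemma subD f g : S f -> S g -> S (f + g). Proof. by case: hS => _ H _ _; apply: H. Qed.
Lemma subM f g : S f -> S g -> S (f * g). Proof. by case: hS => _ _ H _; apply: H. Qed.
Lemma subZ c f : S f -> S (c *: f). Proof. by case: hS => _ _ _ H; apply: H. Qed.
Lemma sub0 : S 0. Proof. by rewrite -mpolyC0; apply: subC. Qed.
Lemma sub1 : S 1. Proof. by have := subC 1. Qed.
Lemma subN f : S f -> S (- f). Proof. by move=> Sf; rewrite -scaleN1r; apply: subZ. Qed.
Lemma subB f g : S f -> S g -> S (f - g). Proof. by move=> Sf Sg; apply: subD => //; apply: subN. Qed.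
Lemma sub_sum (I : Type) (r : seq I) (P : pred I) (F : I -> poly) :
  (forall i, P i -> S (F i)) -> S (\sum_(i <- r | P i) F i).
Proof. by move=> h; elim/big_rec: _ => [|i a Pi Sa]; [exact: sub0 | apply: subD => //; apply: h]. Qed.
Lemma sub_prod (I : Type) (r : seq I) (P : pred I) (F : I -> poly) :
  (forall i, P i -> S (F i)) -> S (\prod_(i <- r | P i) F i).
Proof. by move=> h; elim/big_rec: _ => [|i a Pi Sa]; [exact: sub1 | apply: subM => //; apply: h]. Qed.
Lemma sub_exp f k : S f -> S (f ^+ k).
Proof. by move=> Sf; elim: k => [|k IH]; [rewrite expr0; exact: sub1 | rewrite exprS; apply: subM]. Qed.

Lemma sub_comp (k : nat) (t : 'I_k -> poly) (q : {mpoly K[k]}) :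
  (forall j, S (t j)) -> S (comp_mpoly [tuple t j | j < k] q).
Proof.
move=> ht; rewrite [q]mpolyE raddf_sum /=; apply: sub_sum => m _.
rewrite comp_mpolyZ comp_mpolyX; apply: subZ; apply: sub_prod => i _.
by rewrite tnth_mktuple; apply: sub_exp.
Qed.
End Subalg.

Lemma pbrDr f g h : pbr br h (f + g) = pbr br h f + pbr br h g.
Proof. by rewrite (pbrC hbr) pbrDl opprD -!(pbrC hbr). Qed.
Lemma pbrZr c f h : pbr br h (c *: f) = c *: pbr br h f.
Proof. by rewrite (pbrC hbr) pbrZl -scalerN -(pbrC hbr). Qed.
Lemma pbrCr c h : pbr br h c%:MP = 0.
Proof. by rewrite (pbrC hbr) pbrCl oppr0. Qed.
Lemma pbrMr f g h : pbr br h (f * g) = f * pbr br h g + g * pbr br h f.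
Proof. by rewrite (pbrC hbr) pbrMl opprD -!mulrN -!(pbrC hbr). Qed.

Lemma dspan0 (F : poly -> Prop) (x : vec) : dspan F x 0.
Proof. by exists 0%N, (fun i => 0), (fun i => 0); split; [case | rewrite big_ord0]. Qed.

Lemma dspan_comb (F : poly -> Prop) (x : vec) a u v : dspan F x u -> dspan F x v -> dspan F x (a *: u + v).
Proof.
move=> [k1 [fs1 [cs1 [h1 ->]]]] [k2 [fs2 [cs2 [h2 ->]]]].
exists (k1 + k2)%N.
exists (fun i => match split i with inl j => fs1 j | inr j => fs2 j end).
exists (fun i => match split i with inl j => a * cs1 j | inr j => cs2 j end).
split.
  by move=> i; case: (split i).
rewrite big_split_ord /= scaler_sumr; congr (_ + _); apply: eq_bigr => j _.
  by have -> : split (lshift k2 j) = inl j := unsplitK (inl _); rewrite scalerA.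
by have -> : split (rshift k1 j) = inr j := unsplitK (inr _).
Qed.

Lemma dspan_add (F : poly -> Prop) (x : vec) u v : dspan F x u -> dspan F x v -> dspan F x (u + v).
Proof. by move=> hu hv; rewrite -[u]scale1r; apply: dspan_comb. Qed.
Lemma dspan_scale (F : poly -> Prop) (x : vec) a u : dspan F x u -> dspan F x (a *: u).
Proof. by move=> hu; rewrite -[_ *: u]addr0; apply: dspan_comb => //; apply: dspan0. Qed.
Lemma dspan_sum (F : poly -> Prop) (x : vec) (I : Type) (r : seq I) (P : pred I) (G : I -> vec) :
  (forall i, P i -> dspan F x (G i)) -> dspan F x (\sum_(i <- r | P i) G i).
Proof. by move=> h; elim/big_rec: _ => [|i a Pi Sa]; [exact: dspan0 | apply: dspan_add => //; apply: h]. Qed.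
Lemma dspan_gen (F : poly -> Prop) x f : F f -> dspan F x (dpoly f x).
Proof.
move=> Ff; exists 1%N, (fun _ => f), (fun _ => 1); split => //.
by rewrite big_ord1 scale1r.
Qed.
Lemma dspan_mono (F G : poly -> Prop) x v :
  (forall f, F f -> G f) -> dspan F x v -> dspan G x v.
Proof. by move=> FG [k [fs [cs [h ->]]]]; exists k, fs, cs; split => // i; apply: FG. Qed.
Lemma dspan_subspace (F : poly -> Prop) (x : vec) : is_subspace (dspan F x).
Proof. by split; [exact: dspan0 | move=> *; apply: dspan_comb]. Qed.

Lemma PhiDl (x : vec) u v w : Phi br x (u + v) w = Phi br x u w + Phi br x v w.
Proof. by rewrite !PhiE (brDl hbr) prD. Qed.
Lemma PhiZl (x : vec) a u w : Phi br x (a *: u) w = a * Phi br x u w.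
Proof. by rewrite !PhiE (brZl hbr) prZ. Qed.
Lemma PhiDr (x : vec) u v w : Phi br x w (u + v) = Phi br x w u + Phi br x w v.
Proof. by rewrite !PhiE (brDr hbr) prD. Qed.
Lemma PhiZr (x : vec) a u w : Phi br x w (a *: u) = a * Phi br x w u.
Proof. by rewrite !PhiE (brZr hbr) prZ. Qed.
Lemma Phi0l (x : vec) w : Phi br x 0 w = 0.
Proof. by rewrite PhiE (br0l hbr) pr0. Qed.
Lemma Phi0r (x : vec) w : Phi br x w 0 = 0.
Proof. by rewrite PhiE (br0r hbr) pr0. Qed.
Lemma PhiC (x : vec) u v : Phi br x u v = - Phi br x v u.
Proof. by rewrite !PhiE (brC hbr) prN. Qed.
Lemma Phixx (x : vec) u : Phi br x u u = 0.
Proof. by rewrite PhiE (brvv hbr) pr0. Qed.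
Lemma PhiNl (x : vec) u w : Phi br x (- u) w = - Phi br x u w.
Proof. by rewrite -scaleN1r PhiZl mulN1r. Qed.
Lemma PhiBl (x : vec) u v w : Phi br x (u - v) w = Phi br x u w - Phi br x v w.
Proof. by rewrite PhiDl PhiNl. Qed.
Lemma Phi_suml (x : vec) (I : Type) (r : seq I) (P : pred I) (G : I -> vec) w :
  Phi br x (\sum_(i <- r | P i) G i) w = \sum_(i <- r | P i) Phi br x (G i) w.
Proof. by elim/big_rec2: _ => [|i a b _ <-]; rewrite ?Phi0l ?PhiDl. Qed.
Lemma Phi_sumr (x : vec) (I : Type) (r : seq I) (P : pred I) (G : I -> vec) w :
  Phi br x w (\sum_(i <- r | P i) G i) = \sum_(i <- r | P i) Phi br x w (G i).
Proof. by elim/big_rec2: _ => [|i a b _ <-]; rewrite ?Phi0r ?PhiDr. Qed.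

Lemma dspan_iso (F : poly -> Prop) (x : vec) : is_commutative br F -> isotropic br x (dspan F x).
Proof.
move=> hc u v [k1 [fs1 [cs1 [h1 ->]]]] [k2 [fs2 [cs2 [h2 ->]]]].
rewrite Phi_suml big1 // => i _; rewrite PhiZl Phi_sumr big1 ?mulr0 // => j _.
by rewrite PhiZr -(evalp_pbr hbr) hc // /evalp meval0 mulr0.
Qed.

Lemma poisson_sum_comm (A B : poly -> Prop) :
  is_commutative br A -> is_commutative br B ->
  (forall a b, A a -> B b -> pbr br a b = 0) ->
  is_commutative br (poisson_sum br A B).
Proof.
move=> cA cB cAB.
pose X := fun f => forall g, (A g \/ B g) -> pbr br f g = 0.
pose C := fun f => X f /\ forall g, X g -> pbr br f g = 0.
have sX : is_subalg X.
  split.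
  - by move=> c g _; rewrite pbrCl.
  - by move=> f g hf hg h Ah; rewrite pbrDl hf // hg // addr0.
  - by move=> f g hf hg h Ah; rewrite pbrMl hf // hg // !mulr0 addr0.
  - by move=> c f hf h Ah; rewrite pbrZl hf // scaler0.
have sC : is_subalg C.
  split.
  - by move=> c; split; [apply: (subC sX) | move=> g _; rewrite pbrCl].
  - move=> f g [hf1 hf2] [hg1 hg2]; split; first by apply: (subD sX).
    by move=> h Xh; rewrite pbrDl hf2 // hg2 // addr0.
  - move=> f g [hf1 hf2] [hg1 hg2]; split; first by apply: (subM sX).
    by move=> h Xh; rewrite pbrMl hf2 // hg2 // !mulr0 addr0.
  - move=> c f [hf1 hf2]; split; first by apply: (subZ sX).
    by move=> h Xh; rewrite pbrZl hf2 // scaler0.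
have pC : is_poisson_subalg br C.
  split => // f g [_ hf] [hg _]; rewrite hf //.
  by rewrite -mpolyC0; apply: (subC sC).
have AX : forall a, A a -> X a.
  by move=> a Aa g [Ag|Bg]; [apply: cA | apply: cAB].
have BX : forall b, B b -> X b.
  by move=> b Bb g [Ag|Bg]; [rewrite (pbrC hbr) cAB // oppr0 | apply: cB].
have AC : forall a, A a -> C a.
  move=> a Aa; split; first exact: AX.
  by move=> g Xg; rewrite (pbrC hbr) Xg ?oppr0 //; left.
have BC : forall b, B b -> C b.
  move=> b Bb; split; first exact: BX.
  by move=> g Xg; rewrite (pbrC hbr) Xg ?oppr0 //; right.
move=> f g hf hg.
have [_ Cf] := hf C pC AC BC.
by have [Cg _] := hg C pC AC BC; apply: Cf.
Qed.

End Part2.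


Section Heis.
Variable K : fieldType.
Variable n : nat.
Local Notation vec := 'rV[K]_n.
Local Notation poly := {mpoly K[n]}.
Variable br : vec -> vec -> vec.
Hypothesis hbr : is_lie_bracket br.
Variable m : nat.
Variable om : 'M[K]_(m.*2).
Hypothesis hom : symplectic_form om.
Variable phi : {linear 'rV[K]_(m.*2 + 1) -> 'rV[K]_n}.
Hypothesis phi_inj : injective phi.
Hypothesis phi_hom : forall u v, phi (heis_br om u v) = br (phi u) (phi v).
Hypothesis h_ideal : is_ideal br (img phi).
Hypothesis h_center : forall z, center br z <-> center_in br (img phi) z.
Hypothesis hK : [pchar K] =i pred0.

Local Notation M := (m.*2).
Local Notation hv := 'rV[K]_(M + 1).

Definition eps (u v : hv) : K := (lsubmx u *m om *m (lsubmx v)^T) 0 0.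
Definition e1 : hv := row_mx 0 1%:M.
Definition ee : vec := phi e1.
Definition psi (a : 'rV[K]_M) : vec := phi (row_mx a 0).

Lemma heis_brE u v : heis_br om u v = eps u v *: e1.
Proof.
rewrite /heis_br /e1 scale_row_mx scaler0 scalemx1; congr row_mx.
exact: mx11_scalar.
Qed.

Lemma br_phi u v : br (phi u) (phi v) = eps u v *: ee.
Proof. by rewrite -phi_hom heis_brE linearZ. Qed.

Lemma eps_sum u v : eps u v = \sum_(l < M) (lsubmx v) 0 l * (lsubmx u *m om) 0 l.
Proof. by rewrite /eps mxE; apply: eq_bigr => l _; rewrite [_^T _ _]mxE mulrC. Qed.

Lemma e1_neq0 : e1 != 0.
Proof.
apply/negP => /eqP /rowP /(_ (rshift M ord0)).
by rewrite /e1 row_mxEr !mxE /= => /eqP; rewrite oner_eq0.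
Qed.

Lemma ee_neq0 : ee != 0.
Proof.
apply/eqP => h; move/eqP: e1_neq0; apply; apply: phi_inj.
by rewrite -/ee h linear0.
Qed.

Lemma img_phi (u : hv) : img phi (phi u).
Proof. by exists u. Qed.

Lemma img_sub : is_subspace (img phi).
Proof.
split; first by exists 0; rewrite linear0.
by move=> a _ _ [u ->] [v ->]; exists (a *: u + v); rewrite linearP.
Qed.

Lemma img_add u v : img phi u -> img phi v -> img phi (u + v).
Proof. by move=> hu hv; have := (img_sub.2 1 u v hu hv); rewrite scale1r. Qed.
Lemma img_scale a u : img phi u -> img phi (a *: u).
Proof. by move=> hu; have := (img_sub.2 a u 0 hu img_sub.1); rewrite addr0. Qed.
Lemma img0 : img phi 0. Proof. exact: img_sub.1. Qed.
Lemma img_sum (I : Type) (r : seq I) (P : pred I) (G : I -> vec) :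
  (forall i, P i -> img phi (G i)) -> img phi (\sum_(i <- r | P i) G i).
Proof. by move=> h; elim/big_rec: _ => [|i a Pi Sa]; [exact: img0 | apply: img_add => //; apply: h]. Qed.

Lemma ee_img : img phi ee. Proof. exact: img_phi. Qed.
Lemma psi_img a : img phi (psi a). Proof. exact: img_phi. Qed.

Lemma eps_e1l v : eps e1 v = 0.
Proof. by rewrite /eps /e1 row_mxKl !mul0mx mxE. Qed.

Lemma ee_center : center br ee.
Proof.
apply/h_center; split; first exact: ee_img.
by move=> y [v ->]; rewrite br_phi eps_e1l scale0r.
Qed.

Lemma br_ee_l y : br ee y = 0. Proof. exact: ee_center. Qed.
Lemma br_ee_r y : br y ee = 0. Proof. by rewrite (brC hbr) br_ee_l oppr0. Qed.

Lemma psiD a b : psi (a + b) = psi a + psi b.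
Proof. by rewrite /psi -linearD add_row_mx addr0. Qed.
Lemma psiZ c a : psi (c *: a) = c *: psi a.
Proof. by rewrite /psi -linearZ scale_row_mx scaler0. Qed.
Lemma psi0 : psi 0 = 0.
Proof. by rewrite /psi row_mx0 linear0. Qed.
Lemma psi_sum (I : Type) (r : seq I) (P : pred I) (G : I -> 'rV_M) :
  psi (\sum_(i <- r | P i) G i) = \sum_(i <- r | P i) psi (G i).
Proof. by elim/big_rec2: _ => [|i a b _ <-]; rewrite ?psi0 ?psiD. Qed.

Lemma rowv_decomp p (u : 'rV[K]_p) : u = \sum_(i < p) u 0 i *: delta_mx 0 i.
Proof.
apply/rowP => j; rewrite summxE (bigD1 j) //= big1 ?addr0.
  by rewrite !mxE !eqxx mulr1.
by move=> i nij; rewrite !mxE eqxx /= eq_sym (negbTE nij) mulr0.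
Qed.

Lemma psiE a : psi a = \sum_(l < M) a 0 l *: psi (delta_mx 0 l).
Proof. by rewrite {1}[a]rowv_decomp psi_sum; apply: eq_bigr => l _; rewrite psiZ. Qed.

Lemma phi_decomp (u : hv) : phi u = psi (lsubmx u) + (rsubmx u 0 0) *: ee.
Proof.
rewrite /psi /ee -linearZ -linearD; apply: f_equal.
rewrite /e1 scale_row_mx scaler0 add_row_mx addr0 add0r scalemx1 -mx11_scalar.
by rewrite hsubmxK.
Qed.


Lemma eps_anti u v : eps u v = - eps v u.
Proof.
have := brC hbr (phi u) (phi v); rewrite !br_phi -scaleNr => /eqP.
rewrite -subr_eq0 -scalerBl scaler_eq0 (negbTE ee_neq0) orbF subr_eq0.
by move/eqP.
Qed.

Lemma Phi_phi x u v : Phi br x (phi u) (phi v) = eps u v * pr x ee.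
Proof. by rewrite PhiE br_phi prZ. Qed.

Lemma sum_delta p (a : 'I_p -> K) k : \sum_(l < p) a l * (delta_mx 0 k : 'rV[K]_p) 0 l = a k.
Proof.
rewrite (bigD1 k) //= big1 ?addr0; first by rewrite mxE !eqxx mulr1.
by move=> l nlk; rewrite mxE eqxx /= (negbTE nlk) mulr0.
Qed.

Lemma eps_row k v : eps (row_mx (row k (invmx om)) 0) v = lsubmx v 0 k.
Proof.
case: hom => _ omu.
rewrite eps_sum row_mxKl -row_mul mulVmx // row1.
exact: sum_delta.
Qed.

Lemma br_xi_phi xi v :
  br xi (phi v) = \sum_(l < M) lsubmx v 0 l *: br xi (psi (delta_mx 0 l)).
Proof.
rewrite phi_decomp (brDr hbr) (brZr hbr) br_ee_r scaler0 addr0.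
by rewrite psiE (br_sumr hbr); apply: eq_bigr => l _; rewrite (brZr hbr).
Qed.

Let Jac u v w : br u (br v w) + br v (br w u) + br w (br u v) = 0.
Proof. by move: hbr; rewrite /is_lie_bracket; case. Qed.

Section Construct.
Variable xi : vec.
Variable uu : 'I_M -> hv.
Hypothesis huu : forall k, br xi (psi (delta_mx 0 k)) = phi (uu k).

Definition cs k l := eps (uu k) (row_mx (delta_mx 0 l) 0).

Lemma eps_uu k v : eps (uu k) v = \sum_(l < M) lsubmx v 0 l * cs k l.
Proof.
rewrite eps_sum; apply: eq_bigr => l _; congr (_ * _).
by rewrite /cs eps_sum row_mxKl; under eq_bigr do rewrite mulrC; rewrite sum_delta.
Qed.

Lemma cs_sym k l : cs k l = cs l k.
Proof.
have := Jac xi (psi (delta_mx 0 k)) (psi (delta_mx 0 l)).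
rewrite [br (psi _) xi](brC hbr) !huu (brNr hbr) /psi !br_phi.
rewrite (brZr hbr) br_ee_r scaler0 add0r => /eqP.
rewrite -scaleNr -scalerDl scaler_eq0 (negbTE ee_neq0) orbF.
rewrite [eps (row_mx _ 0) (uu l)]eps_anti [eps (row_mx _ 0) (uu k)]eps_anti opprK.
rewrite -/(cs l k) -/(cs k l) => h; apply/eqP; rewrite eq_sym -subr_eq0 h.
by [].
Qed.

Definition EE : poly := lin ee.
Definition WW k : poly := lin (psi (row k (invmx om))).
Definition LL k : poly := lin (br xi (psi (delta_mx 0 k))).
Definition inv2 : K := (2%:R)^-1.
Definition Gp : poly := - (\sum_(k < M) WW k * LL k) +
  inv2 *: \sum_(k < M) \sum_(l < M) cs k l *: (WW k * WW l).
Definition FF : poly := EE * lin xi + Gp.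

Variable v : hv.
Local Notation eta := (phi v).
Local Notation aa := (lsubmx v).

Lemma Der_EE : Der br eta EE = 0.
Proof. by rewrite /EE (Der_lin hbr) br_ee_l lin0. Qed.

Lemma Der_WW k : Der br eta (WW k) = (aa 0 k) *: EE.
Proof.
by rewrite /WW (Der_lin hbr) /psi br_phi eps_row linZ.
Qed.

Lemma Der_LL k : Der br eta (LL k) =
  (\sum_(l < M) aa 0 l * cs k l) *: EE.
Proof.
by rewrite /LL (Der_lin hbr) huu br_phi eps_uu linZ.
Qed.

Lemma Der_X : Der br eta (lin xi) =
  \sum_(l < M) aa 0 l *: LL l.
Proof.
by rewrite (Der_lin hbr) br_xi_phi lin_sum; apply: eq_bigr => l _; rewrite linZ.
Qed.


Lemma two_neq0 : (2%:R : K) != 0.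
Proof. by rewrite ((pcharf0P K).1 hK 2). Qed.

Lemma Der_WW2 k l : Der br eta (WW k * WW l) =
  aa 0 l *: (WW k * EE) + aa 0 k *: (WW l * EE).
Proof. by rewrite DerM !Der_WW -!scalerAr. Qed.

Lemma Der_FF : Der br eta FF = 0.
Proof.
set T1 := \sum_(k < M) (\sum_(l < M) aa 0 l * cs k l) *: (WW k * EE).
set S := \sum_(k < M) aa 0 k *: (LL k * EE).
have h1 : \sum_(k < M) Der br eta (WW k * LL k) = T1 + S.
  rewrite /T1 /S -big_split; apply: eq_bigr => k _ /=.
  by rewrite /= DerM Der_WW Der_LL -!scalerAr addrC.
have h2 : \sum_(k < M) Der br eta (\sum_(l < M) cs k l *: (WW k * WW l)) = T1 + T1.
  transitivity (\sum_(k < M) \sum_(l < M) (cs k l * aa 0 l) *: (WW k * EE) +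
                \sum_(k < M) \sum_(l < M) (cs k l * aa 0 k) *: (WW l * EE)).
    rewrite -big_split; apply: eq_bigr => k _ /=.
    rewrite Der_sum -big_split; apply: eq_bigr => l _ /=.
    by rewrite DerZ Der_WW2 scalerDr !scalerA.
  congr (_ + _).
    by apply: eq_bigr => k _; rewrite scaler_suml; apply: eq_bigr => l _; rewrite mulrC.
  rewrite exchange_big; apply: eq_bigr => l _; rewrite scaler_suml.
  by apply: eq_bigr => k _; rewrite cs_sym mulrC.
have h3 : EE * (\sum_(l < M) aa 0 l *: LL l) = S.
  rewrite mulr_sumr; apply: eq_bigr => l _.
  by rewrite -scalerAr mulrC.
rewrite /FF /Gp DerD DerM Der_EE mulr0 addr0 Der_X DerD DerN Der_sum DerZ Der_sum.
rewrite h1 h2 h3 -mulr2n -scaler_nat scalerA mulVf ?two_neq0 // scale1r.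
by rewrite opprD [- T1 + _]addrC -addrA addNr addr0 subrr.
Qed.


End Construct.

Definition Good (f : poly) : Prop := forall x, img phi (dpoly f x).

Lemma Good_sub : is_subalg Good.
Proof.
split.
- by move=> c x; rewrite dpolyC; exact: img0.
- by move=> f g hf hg x; rewrite dpolyD; apply: img_add.
- by move=> f g hf hg x; rewrite dpolyM; apply: img_add; apply: img_scale.
- by move=> c f hf x; rewrite dpolyZ; apply: img_scale.
Qed.

Lemma Good_lin u : img phi u -> Good (lin u).
Proof. by move=> hu x; rewrite dpoly_lin. Qed.

Lemma EE_Ann : Ann br (img phi) EE.
Proof. by move=> eta _; rewrite (pbr_lin hbr) (Der_lin hbr) br_ee_l lin0. Qed.

Lemma exists_F xi : exists F : poly, Ann br (img phi) F /\
  forall x, exists y, img phi y /\ dpoly F x = evalp EE x *: xi + y.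
Proof.
have : forall k : 'I_M, exists u, br xi (psi (delta_mx 0 k)) = phi u.
  move=> k; case: h_ideal => _ hI.
  by have [u hu] := hI xi _ (psi_img (delta_mx 0 k)); exists u.
case/fin_all_exists => uu huu.
exists (FF xi uu); split.
  move=> eta [v ->]; rewrite (pbr_lin hbr).
  exact: Der_FF.
move=> x; exists (evalp (lin xi) x *: ee + dpoly (Gp xi uu) x); split.
  apply: img_add; first by apply: img_scale; exact: ee_img.
  have GG : Good (Gp xi uu).
    apply: (subD Good_sub).
      apply: (subN Good_sub); apply: (sub_sum Good_sub) => k _.
      apply: (subM Good_sub); apply: Good_lin; first exact: psi_img.
      by rewrite huu; exact: img_phi.
    apply: (subZ Good_sub); apply: (sub_sum Good_sub) => k _.
    apply: (sub_sum Good_sub) => l _; apply: (subZ Good_sub).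
    by apply: (subM Good_sub); apply: Good_lin; exact: psi_img.
  exact: GG.
by rewrite /FF dpolyD dpolyM !dpoly_lin addrA.
Qed.

Lemma keyAnn x w : evalp EE x != 0 ->
  (forall eta, img phi eta -> Phi br x w eta = 0) ->
  dspan (Ann br (img phi)) x w.
Proof.
move=> xe0 wperp.
set xe := evalp EE x.
have : forall i : 'I_n, exists F : poly, Ann br (img phi) F /\
  exists y, img phi y /\ dpoly F x = xe *: delta_mx 0 i + y.
  by move=> i; have [F [h1 h2]] := exists_F (delta_mx 0 i); exists F; split; last exact: h2.
case/fin_all_exists => Fs hFs.
have : forall i : 'I_n, exists y, img phi y /\ dpoly (Fs i) x = xe *: delta_mx 0 i + y.
  by move=> i; apply: (hFs i).2.
case/fin_all_exists => yy hyy.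
set S := \sum_(i < n) w 0 i *: dpoly (Fs i) x.
set h0 := \sum_(i < n) w 0 i *: yy i.
have hS : S = xe *: w + h0.
  rewrite /S /h0 {2}[w]row_decomp scaler_sumr -big_split; apply: eq_bigr => i _ /=.
  by rewrite (hyy i).2 scalerDr !scalerA mulrC.
have imh0 : img phi h0 by apply: img_sum => i _; apply: img_scale; exact: (hyy i).1.
have perp : forall eta, img phi eta -> Phi br x h0 eta = 0.
  move=> eta heta.
  have -> : h0 = S - xe *: w by rewrite hS [xe *: w + h0]addrC addrK.
  rewrite (PhiBl hbr) (PhiZl hbr) wperp // mulr0 subr0 /S (Phi_suml hbr) big1 // => i _.
  rewrite (PhiZl hbr) -[eta](dpoly_lin _ x) -(evalp_pbr hbr) (hFs i).1 //.
  by rewrite /evalp meval0 mulr0.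
case: imh0 => u0 hu0.
have l0 : lsubmx u0 = 0.
  have : lsubmx u0 *m om = 0.
    apply/rowP => j.
    have := perp _ (psi_img (delta_mx 0 j)).
    rewrite hu0 /psi Phi_phi => /eqP; rewrite mulf_eq0 -/ee -/EE.
    rewrite -(evalp_lin ee x) -/EE (negbTE xe0) orbF => /eqP.
    rewrite eps_sum row_mxKl; under eq_bigr do rewrite mulrC.
    by rewrite sum_delta => ->; rewrite mxE.
  case: hom => _ omu => /(congr1 (mulmx^~ (invmx om))).
  by rewrite mulmxK // mul0mx.
have h0E : h0 = (rsubmx u0 0 0) *: dpoly EE x.
  by rewrite hu0 phi_decomp l0 psi0 add0r /EE dpoly_lin.
have -> : w = xe^-1 *: (S + (- rsubmx u0 0 0) *: dpoly EE x).
  by rewrite hS scaleNr -h0E addrK scalerA mulVf // scale1r.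
apply: dspan_scale; apply: dspan_add.
  by apply: dspan_sum => i _; apply: dspan_scale; apply: dspan_gen; exact: (hFs i).1.
by apply: dspan_scale; apply: dspan_gen; exact: EE_Ann.
Qed.


Lemma extend_max x (L W : vec -> Prop) p :
  max_isotropic_in br x L W -> is_subspace W -> W p ->
  (forall b, L b -> Phi br x b p = 0) -> L p.
Proof.
case=> [[L0 Lc] LW Liso Lmax] [W0 Wc] Wp perp.
pose U := fun z => exists b t, L b /\ z = b + t *: p.
apply: (Lmax U).
- split; first by exists 0, 0; rewrite scale0r addr0.
  move=> a z1 z2 [b1 [t1 [h1 ->]]] [b2 [t2 [h2 ->]]].
  exists (a *: b1 + b2), (a * t1 + t2); split; first exact: Lc.
  by rewrite scalerDr addrACA scalerA scalerDl.
- move=> z1 z2 [b1 [t1 [h1 ->]]] [b2 [t2 [h2 ->]]].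
  rewrite (PhiDl hbr) !(PhiDr hbr) !(PhiZl hbr) !(PhiZr hbr) Liso // perp //.
  rewrite [Phi br x p b2](PhiC hbr) perp // (Phixx hbr).
  by rewrite oppr0 !mulr0 !addr0.
- by move=> b hb; exists b, 0; rewrite scale0r addr0.
- move=> z [b [t [hb ->]]].
  by rewrite addrC; apply: Wc => //; apply: LW.
- by exists 0, 1; rewrite scale1r add0r; split => //; exact: L0.
Qed.

Lemma Sh_lin u : Sh phi (lin (phi u)).
Proof.
exists (\sum_(j < M + 1) u 0 j *: 'X_j).
rewrite raddf_sum /=; rewrite {1}[u]rowv_decomp linear_sum lin_sum.
apply: eq_bigr => j _; rewrite comp_mpolyZ comp_mpolyXU linearZ linZ.
by rewrite (nth_mktuple _ 0).
Qed.

Lemma Sh_Good f : Sh phi f -> Good f.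
Proof.
case=> q ->; apply: (sub_comp Good_sub) => j.
by apply: Good_lin; exact: img_phi.
Qed.

Lemma dspan_Sh_img x z : dspan (Sh phi) x z -> img phi z.
Proof.
case=> k [fs [cs [h ->]]]; apply: img_sum => i _; apply: img_scale.
exact: (Sh_Good (h i)).
Qed.

Lemma EE_neq0 : EE != 0.
Proof.
apply/eqP => h; move/eqP: ee_neq0; apply.
by rewrite -(dpoly_lin ee 0) -/EE h -mpolyC0 dpolyC.
Qed.

Section Main.
Variables A B : poly -> Prop.
Hypothesis hA : is_subalg A.
Hypothesis hAc : complete_in br (Ann br (img phi)) A.
Hypothesis hB : is_subalg B.
Hypothesis hBc : complete_in br (Sh phi) B.

Lemma AB_comm a b : A a -> B b -> pbr br a b = 0.
Proof.
case: hAc => AAnn _ _; case: hBc => BSh _ _.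
move=> Aa Bb; have [q ->] := BSh _ Bb.
pose Z := fun f => pbr br a f = 0.
have sZ : is_subalg Z.
  split.
  - by move=> c; rewrite /Z (pbrCr hbr).
  - by move=> f g hf hg; rewrite /Z (pbrDr hbr) hf hg addr0.
  - by move=> f g hf hg; rewrite /Z (pbrMr hbr) hf hg !mulr0 addr0.
  - by move=> c f hf; rewrite /Z (pbrZr hbr) hf scaler0.
apply: (sub_comp sZ) => j; rewrite /Z.
by apply: (AAnn _ Aa); exact: img_phi.
Qed.

Lemma main_complete : complete_in br (@Sg K n) (poisson_sum br A B).
Proof.
case: (hAc) => AAnn cA [pA [pA0 hpA]].
case: (hBc) => BSh cB [pB [pB0 hpB]].
have cPS := poisson_sum_comm hbr cA cB AB_comm.
have APS : forall f, A f -> poisson_sum br A B f by move=> f Af C _ h _; apply: h.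
have BPS : forall f, B f -> poisson_sum br A B f by move=> f Bf C _ _ h; apply: h.
split => //.
exists (EE * pA * pB); split.
  by rewrite !mulf_neq0 // EE_neq0.
move=> x; rewrite !evalpM !mulf_eq0 !negb_or => /andP [/andP [xe0 xA] xB].
have mA := hpA x xA; have mB := hpB x xB.
split.
- exact: dspan_subspace.
- by move=> z _; rewrite -(dpoly_lin z x); apply: dspan_gen.
- exact: dspan_iso hbr _ _ cPS.
move=> U [U0 Uc] Uiso LU _ v Uv.
have AU : forall z, dspan A x z -> U z.
  by move=> z hz; apply: LU; apply: dspan_mono hz.
have BU : forall z, dspan B x z -> U z.
  by move=> z hz; apply: LU; apply: dspan_mono hz.
set xe := evalp EE x.
set c : 'rV[K]_M := \row_j Phi br x v (psi (delta_mx 0 j)).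
set a : 'rV[K]_M := xe^-1 *: (c *m invmx om).
have Phi_psi_v : forall b, Phi br x v (psi b) = \sum_(l < M) b 0 l * c 0 l.
  move=> b; rewrite psiE (Phi_sumr hbr); apply: eq_bigr => l _.
  by rewrite (PhiZr hbr) mxE.
have Phi_psi_a : forall b, Phi br x (psi a) (psi b) = Phi br x v (psi b).
  move=> b; rewrite Phi_psi_v /psi Phi_phi eps_sum !row_mxKl.
  rewrite -(evalp_lin ee x) -/EE -/xe mulr_suml; apply: eq_bigr => l _.
  case: hom => _ omu.
  rewrite /a -scalemxAl mulmxKV // mxE -mulrA mulrAC mulVf // mul1r.
  done.
set w := v - psi a.
have wperp : forall eta, img phi eta -> Phi br x w eta = 0.
  move=> eta [u ->]; rewrite phi_decomp (PhiDr hbr) (PhiZr hbr).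
  rewrite (PhiBl hbr) Phi_psi_a subrr add0r.
  by rewrite PhiE br_ee_r pr0 mulr0.
have pB_in : dspan B x (psi a).
  apply: (extend_max mB) => //.
  - exact: dspan_subspace.
  - by rewrite -(dpoly_lin (psi a) x); apply: dspan_gen; exact: Sh_lin.
  move=> b hb.
  have -> : psi a = v - w by rewrite /w opprB addrC subrK.
  rewrite (PhiC hbr) (PhiBl hbr) -!(PhiC hbr) Uiso //; last exact: BU.
  rewrite [Phi br x b w](PhiC hbr) wperp ?subrr ?oppr0 //.
  by apply: dspan_Sh_img; apply: dspan_mono hb.
have Uw : U w.
  by rewrite /w addrC -scaleN1r; apply: Uc => //; apply: BU.
have wA : dspan A x w.
  apply: (extend_max mA) => //.
  - exact: dspan_subspace.
  - exact: keyAnn.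
  by move=> b hb; apply: Uiso => //; apply: AU.
have -> : v = psi a + w by rewrite /w addrC subrK.
apply: dspan_add.
  by apply: dspan_mono pB_in.
by apply: dspan_mono wA.
Qed.

End Main.

End Heis.

Theorem proposition5 (K : fieldType) (hK : [pchar K] =i pred0)
  (n : nat) (br : 'rV[K]_n -> 'rV[K]_n -> 'rV[K]_n) (hbr : is_lie_bracket br)
  (m : nat) (om : 'M[K]_(m.*2)) (hom : symplectic_form om)
  (phi : {linear 'rV[K]_(m.*2 + 1) -> 'rV[K]_n})
  (phi_inj : injective phi)
  (phi_hom : forall u v, phi (heis_br om u v) = br (phi u) (phi v))
  (h_ideal : is_ideal br (img phi))
  (h_center : forall z, center br z <-> center_in br (img phi) z)
  (A B : {mpoly K[n]} -> Prop)
  (hA : is_subalg A) (hAc : complete_in br (Ann br (img phi)) A)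
  (hB : is_subalg B) (hBc : complete_in br (Sh phi) B) :
  complete_in br (Sg (n:=n)) (poisson_sum br A B).
Proof. exact: (main_complete hbr hom phi_inj phi_hom h_ideal h_center hK hAc hBc). Qed.
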